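(* Define $L_0 = 0^+$ and $L_k = L_{k-1} \cup L_{k-1}\, k\, \{0,\ldots,k-1\}^*$ for $k \ge 1$. For all $k \ge 0$ and all $x \in \mathbb{N}^*$ we have $\mathrm{alt}_{L_k}(x) \le 2^{k+2}-2$. Moreover, regarding $L_k$ as a language over the alphabet $\{0,\ldots,k\}$, $V_{L_k}(n) \le (2^{k+3}\cdot(k+3)+1)\cdot\log n + c_k$ for all sufficiently large $n$, where $c_k$ depends only on $k$.
   Context: Words are over the (infinite) alphabet $\mathbb{N}$ for the first claim. For a language $L$ and $x=a_1\cdots a_n$, a position $1\le i\le n$ is an $L$-alternation point if exactly one of $a_i\cdots a_n$ and $a_{i+1}\cdots a_n$ belongs to $L$; $\mathrm{alt}_L(x)$ is their number. $\log x=\lfloor\log_2 x\rfloor$. Variable-size sliding window model over a finite alphabet $\Sigma$: a streaming algorithm is a deterministic (possibly infinite-state) automaton with an injective encoding $\mathrm{enc}$ of states into bit strings; over $\overline\Sigma=\Sigma\cup\{\downarrow\}$ define $\mathrm{wnd}(\varepsilon)=\varepsilon$, $\mathrm{wnd}(ub)=\mathrm{wnd}(u)b$ ($b\in\Sigma$), $\mathrm{wnd}(u\!\downarrow)=\varepsilon$ if $\mathrm{wnd}(u)=\varepsilon$, $\mathrm{wnd}(u\!\downarrow)=v$ if $\mathrm{wnd}(u)=bv$. A variable-size sliding window algorithm for $L$ accepts $\{w\in\overline\Sigma^*:\mathrm{wnd}(w)\in L\}$ with space complexity $v_\mathcal{A}(n)=\max\{|\mathrm{enc}(\mathcal{A}(u'))|:u'\text{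 prefix of }u,\ |\mathrm{wnd}(v)|\le n\text{ for all prefixes }v\text{ of }u\}$; $V_L(n)$ is the minimum of $v_\mathcal{A}(n)$ over all such algorithms. *)

(* Defs.v *)
From mathcomp Require Import all_boot.
Set Implicit Arguments. Unset Strict Implicit. Unset Printing Implicit Defensive.

(* Membership in the concatenation L_{k-1} k {0..k-1}^* is decided by
   trying every split position i of w: w = take i w ++ (w_i :: drop i.+1 w). *)
Fixpoint inL (k : nat) (w : seq nat) : bool :=
  match k with
  | 0 => (w != [::]) && all (fun a => a == 0) w
  | k'.+1 =>
      inL k' w ||
      has (fun i => [&& inL k' (take i w), nth 0 w i == k'.+1
                      & all (fun a => a < k'.+1) (drop i.+1 w)])
          (iota 0 (size w))
  end.

(* alt_L(x): number of positions i (1 <= i <= n) such that exactly one of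
   a_i...a_n and a_{i+1}...a_n belongs to L.  With 0-based index j = i-1,
   a_i...a_n = drop j x and a_{i+1}...a_n = drop j.+1 x. *)
Definition alt (L : pred (seq nat)) (x : seq nat) : nat :=
  count (fun j => L (drop j x) != L (drop j.+1 x)) (iota 0 (size x)).

Definition log2 (x : nat) : nat := trunc_log 2 x.

(* Extended alphabet  Σ ∪ {↓}  rendered as option Σ, with None = ↓. *)
Fixpoint wnd_rev (S : Type) (acc : seq S) (u : seq (option S)) : seq S :=
  match u with
  | [::] => acc
  | Some b :: u' => wnd_rev (rcons acc b) u'
  | None :: u' => wnd_rev (behead acc) u'
  end.
Definition wnd (S : Type) (u : seq (option S)) : seq S := wnd_rev [::] u.

Record stream_alg (S : Type) := StreamAlg {
  st : Type;
  init : st;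
  step : st -> option S -> st;
  accept : st -> bool;
  enc : st -> seq bool;
  enc_inj : injective enc
}.

Definition run (S : Type) (A : stream_alg S) (u : seq (option S)) : st A :=
  foldl (@step S A) (@init S A) u.

Definition sw_alg_for (S : Type) (L : seq S -> bool) (A : stream_alg S) : Prop :=
  forall w : seq (option S), accept (run A w) = L (wnd w).

(* v_A(n) <= b, where v_A(n) is the maximum of |enc(A(u'))| over prefixes u'
   of streams u all of whose prefixes v satisfy |wnd(v)| <= n
   (the maximum being +infinity if unbounded). *)
Definition space_le (S : Type) (A : stream_alg S) (n b : nat) : Prop :=
  forall u : seq (option S),
    (forall i, size (wnd (take i u)) <= n) ->
    forall i, size (enc (run A (take i u))) <= b.

(* V_L(n) <= b, where V_L(n) is the minimum of v_A(n) over all variable-size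
   sliding window algorithms A for L. *)
Definition V_le (S : Type) (L : seq S -> bool) (n b : nat) : Prop :=
  exists A : stream_alg S, sw_alg_for L A /\ space_le A n b.

Definition Lfin (k : nat) (w : seq 'I_k.+1) : bool := inL k (map val w).

(* Main.v *)
Require Import Defs.
From mathcomp Require Import all_boot zify.
Set Implicit Arguments. Unset Strict Implicit. Unset Printing Implicit Defensive.

Fixpoint chk (m : nat) (w : seq nat) : bool :=
  match w with
  | [::] => true
  | a :: w' => ((a == 0) || (a != m)) && chk (maxn m a) w'
  end.

Lemma chk_cat m s r : chk m (s ++ r) = chk m s && chk (foldl maxn m s) r.
Proof. by elim: s m => [|a s IH] m //=; rewrite IH andbA. Qed.

Lemma chk_zero m v : all (fun a => a == 0) v -> chk m v.
Proof. by elim: v m => [|a v IH] m //= /andP[-> /IH ->]. Qed.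

Lemma chk_lt m v : all (fun a => a < m) v -> chk m v.
Proof.
elim: v => [|a v IH] //= /andP[am /IH]. 
rewrite (maxn_idPl (ltnW am)) => ->; rewrite andbT.
by rewrite neq_ltn am orbT.
Qed.

Lemma chk_le_lt m v : 0 < m -> chk m v -> all (fun a => a <= m) v -> all (fun a => a < m) v.
Proof.
move=> m0; elim: v => [|a v IH] //= /andP[h c] /andP[am al].
rewrite (maxn_idPl am) in c; rewrite IH // andbT.
move: h; rewrite ltn_neqAle am andbT; case/orP => [/eqP->|//].
by rewrite eq_sym -lt0n.
Qed.

Lemma foldl_maxn_le k m u : m <= k -> all (fun a => a <= k) u -> foldl maxn m u <= k.
Proof.
elim: u m => [|a u IH] m //= mk /andP[ak al]; apply: IH => //.
by rewrite geq_max mk ak.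
Qed.

Lemma inL_char k w :
  inL k w = [&& w != [::], head 0 w == 0, all (fun a => a <= k) w & chk 0 w].
Proof.
elim: k w => [|k IH] w.
  case: w => [|a w] //=.
  have E : forall v, all (fun a => a <= 0) v = all (fun a => a == 0) v.
    by move=> v; apply: eq_all => x; rewrite leqn0.
  case: a => [|a] /=; last by [].
  rewrite max0n; case h: (all _ w) => /=.
    by rewrite E h chk_zero.
  by rewrite E h.
rewrite /=.
case: (boolP (k.+1 \in w)) => kw.
- have -> : inL k w = false.
    rewrite IH; apply/negbTE; apply/negP => /and4P[_ _ /allP /(_ _ kw)].
    by rewrite ltnn.
  rewrite /=; apply/idP/idP.
  + case/hasP => i; rewrite mem_iota add0n => /andP[_ iw].
    rewrite IH => /and3P[/and4P[un uh ua uc] /eqP ni va].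
    have Ew : w = take i w ++ k.+1 :: drop i.+1 w.
      by rewrite -ni -drop_nth // cat_take_drop.
    rewrite Ew; move: un uh ua uc va.
    case: (take i w) => [|b u] //= _ /eqP -> /andP[_ ua] /andP[_ uc] va.
    rewrite max0n in uc *.
    have ua' : all (fun a => a <= k.+1) u by apply: sub_all ua => x; exact: leqW.
    have va' : all (fun a => a <= k.+1) (drop i.+1 w) by apply: sub_all va => x; exact: ltnW.
    rewrite all_cat /= ua' va' leqnn /= chk_cat uc /=.
    have M : foldl maxn 0 u <= k by apply: foldl_maxn_le.
    rewrite eq_sym (ltn_eqF (leq_ltn_trans M (ltnSn k))) /=.
    rewrite (maxn_idPr (leqW M)); exact: chk_lt.
  + case/and4P => wn wh wa wc.
    set i := index k.+1 w.
    have iw : i < size w by rewrite index_mem.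
    have ni : nth 0 w i = k.+1 by rewrite nth_index.
    have Ew : w = take i w ++ k.+1 :: drop i.+1 w.
      by rewrite -ni -drop_nth // cat_take_drop.
    have i0 : 0 < i.
      rewrite lt0n; apply/negP => /eqP i0; move: ni wh; rewrite i0.
      by case: (w) => [|b w'] //= -> .
    have kn : k.+1 \notin take i w.
      by rewrite in_take_leq ?ltnn // ltnW.
    apply/hasP; exists i; first by rewrite mem_iota add0n.
    rewrite ni eqxx /=.
    have /andP[ua /andP[_ va]] : all (fun a => a <= k.+1) (take i w) && ((k.+1 <= k.+1) && all (fun a => a <= k.+1) (drop i.+1 w)).
      by move: wa; rewrite {1}Ew all_cat.
    have /andP[uc c] : chk 0 (take i w) && chk (foldl maxn 0 (take i w)) (k.+1 :: drop i.+1 w).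
      by move: wc; rewrite {1}Ew chk_cat.
    have ua' : all (fun a => a <= k) (take i w).
      apply/allP => x xu; have := allP ua x xu; rewrite leq_eqVlt.
      case/orP => [/eqP ex|//]; by move: kn; rewrite -ex xu.
    have M : foldl maxn 0 (take i w) <= k by apply: foldl_maxn_le.
    move: c => /=; rewrite (maxn_idPr (leqW M)) => /andP[_ c].
    rewrite (chk_le_lt _ c va) // andbT IH ua' uc andbT.
    have sz : size (take i w) = i by rewrite size_take iw.
    move: sz wh; rewrite {2}Ew; case: (take i w) => [|b u] /=; first by move=> h; move: i0; rewrite -h.
    by move=> _ ->.
- have -> : has (fun i => [&& inL k (take i w), nth 0 w i == k.+1
                      & all (fun a => a < k.+1) (drop i.+1 w)]) (iota 0 (size w)) = false.
    apply/negbTE/hasPn => i; rewrite mem_iota add0n => /andP[_ iw].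
    apply/negP => /and3P[_ /eqP ni _]; move: kw; by rewrite -ni mem_nth.
  rewrite orbF IH; congr [&& _, _, _ & _].
  apply: eq_in_all => x xw; rewrite [in RHS]leq_eqVlt ltnS.
  by case: eqP => // ex; move: kw; rewrite -ex xw.
Qed.

Lemma inL_nil k : inL k [::] = false.
Proof. by rewrite inL_char. Qed.

Lemma inL_F2 k s : all (fun a => a <= k) s -> inL k.+1 s = inL k s.
Proof.
move=> sa; rewrite !inL_char sa.
by rewrite (sub_all _ sa) // => x; exact: leqW.
Qed.

Lemma inL_F3 k s z : all (fun a => a <= k) s -> all (fun a => a <= k) z ->
  inL k.+1 (s ++ k.+1 :: z) = inL k s.
Proof.
move=> sa za; rewrite !inL_char.
case: s sa => [|b s] //= /andP[bk sa].
case: b bk => [|b] bk //=.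
have sa' : all (fun a => a <= k.+1) s by apply: sub_all sa => x; exact: leqW.
have za' : all (fun a => a <= k.+1) z by apply: sub_all za => x; exact: leqW.
rewrite all_cat /= sa sa' za' ltnSn max0n chk_cat /=.
have M : foldl maxn 0 s <= k by apply: foldl_maxn_le.
rewrite eq_sym (ltn_eqF (leq_ltn_trans M (ltnSn k))) /= (maxn_idPr (leqW M)).
rewrite (@chk_lt k.+1 z) ?andbT //.
Qed.

Lemma inL_F5 k s c z : k < c -> inL k (s ++ c :: z) = false.
Proof.
move=> kc; rewrite inL_char; apply/negbTE/negP => /and4P[_ _ /allP a _].
by have := a c; rewrite mem_cat inE eqxx orbT => /(_ isT); rewrite leqNgt kc.
Qed.

Lemma inL_F4 k s y z : inL k.+1 (s ++ k.+1 :: y ++ k.+1 :: z) = false.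
Proof.
rewrite inL_char; apply/negbTE/negP => /and4P[_ _ wa].
rewrite chk_cat /= => /andP[_ /andP[_ c]].
move: wa; rewrite all_cat /= => /andP[sa /andP[_ ya]].
have M : foldl maxn 0 s <= k.+1 by apply: foldl_maxn_le.
rewrite (maxn_idPr M) in c.
have := chk_le_lt (isT : 0 < k.+1) c ya.
by rewrite all_cat /= ltnn andbF.
Qed.

Fixpoint altR (L : seq nat -> bool) (x : seq nat) : nat :=
  match x with
  | [::] => 0
  | a :: x' => (L (a :: x') != L x') + altR L x'
  end.

Fixpoint altC (L : seq nat -> bool) (z : seq nat) (p : seq nat) : nat :=
  match p with
  | [::] => 0
  | a :: p' => (L (a :: p' ++ z) != L (p' ++ z)) + altC L z p'
  end.

Lemma alt_altR (L : pred (seq nat)) x : alt L x = altR L x.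
Proof.
rewrite /alt; elim: x => [|a x IH] //=.
rewrite -IH; congr (_ + _); first by rewrite drop0.
have -> : iota 1 (size x) = map (addn 1) (iota 0 (size x)) by rewrite -iotaDl.
by rewrite count_map.
Qed.

Lemma altR_cons L a x : altR L (a :: x) = (L (a :: x) != L x) + altR L x.
Proof. by []. Qed.

Lemma altR_cat L p z : altR L (p ++ z) = altC L z p + altR L z.
Proof. by elim: p => [|a p IH] //=; rewrite IH addnA. Qed.

Lemma altC_zero L z p : (forall s, L (s ++ z) = false) -> altC L z p = 0.
Proof.
move=> h; elim: p => [|a p IH] //=.
by rewrite IH -cat_cons !h.
Qed.

Lemma altC_eq (P : pred nat) L L2 z p :
  (forall s, all P s -> L (s ++ z) = L2 s) -> all P p -> altC L z p = altR L2 p.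
Proof.
move=> h; elim: p => [|a p IH] //= /andP[pa pp].
by rewrite IH // -cat_cons !h //= ?pa ?pp.
Qed.

Lemma altR_eq (P : pred nat) L L2 x :
  (forall s, all P s -> L s = L2 s) -> all P x -> altR L x = altR L2 x.
Proof.
move=> h; elim: x => [|a x IH] //= /andP[pa px].
by rewrite IH // !h //= pa px.
Qed.

Lemma decomp t x : all (fun a => a < t) x \/
  exists p c z, [/\ x = p ++ c :: z, t <= c & all (fun a => a < t) z].
Proof.
elim: x => [|a x [IH|[p [c [z [E tc za]]]]]]; first by left.
- case: (ltnP a t) => ha; first by left; rewrite /= ha IH.
  by right; exists [::], a, x.
- by right; exists (a :: p), c, z; rewrite E.
Qed.

Lemma altR_bit (L : seq nat -> bool) a x : (L (a :: x) != L x) <= 1.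
Proof. by case: (_ != _). Qed.

Lemma inL0_E v : all (fun a => a < 1) v -> inL 0 v = (v != [::]).
Proof.
move=> h; have A : all (fun a => a == 0) v.
  by apply: sub_all h => x; rewrite ltnS leqn0.
by case: v h A => [|b v] // _ A; move: A => /= ->.
Qed.

Lemma alt_base x : altR (inL 0) x + 2 <= 4.
Proof.
have Z : forall z, all (fun a => a < 1) z -> altR (inL 0) z <= 1.
  elim=> [|a z IH] // h; have := h => /= /andP[a0 za].
  change ((inL 0 (a :: z) != inL 0 z) + altR (inL 0) z <= 1).
  rewrite (inL0_E h) (inL0_E za).
  case: z IH za {h} => [|b z] IH za; first by [].
  by rewrite add0n IH.
case: (decomp 1 x) => [xa|[p [c [z [-> c1 za]]]]].
  by rewrite (_ : 4 = 2 + 2) // leq_add2r; apply: leq_trans (Z x xa) _.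
rewrite altR_cat altC_zero; last by move=> s; rewrite inL_F5.
rewrite add0n altR_cons (inL_F5 [::]) // (_ : 4 = 1 + 1 + 2) // leq_add2r.
apply: leq_add; [by case: (_ != _) | exact: Z].
Qed.

Lemma all_ltS k s : all (fun a => a < k.+1) s = all (fun a => a <= k) s.
Proof. by apply: eq_all => a; rewrite ltnS. Qed.

Lemma alt_P k y z : all (fun a => a < k.+1) y -> all (fun a => a < k.+1) z ->
  altR (inL k.+1) (y ++ k.+1 :: z) <= altR (inL k) y + 1 + altR (inL k) z.
Proof.
rewrite !all_ltS => ya za.
rewrite altR_cat (altC_eq (P := fun a => a <= k) (L2 := inL k)) //; last first.
  by move=> s sa; rewrite inL_F3.
rewrite altR_cons (altR_eq (P := fun a => a <= k) (L2 := inL k) _ za); last first.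
  by move=> s sa; rewrite inL_F2.
rewrite -addnA leq_add2l leq_add2r; by case: (_ != _).
Qed.

Lemma alt_step k : (forall x, altR (inL k) x + 2 <= 2 ^ (k + 2)) ->
  forall x, altR (inL k.+1) x + 2 <= 2 ^ (k.+1 + 2).
Proof.
move=> IH x.
have -> : 2 ^ (k.+1 + 2) = 2 * 2 ^ (k + 2) by rewrite addSn expnS.
have f2 := IH [::].
set f := 2 ^ (k + 2) in IH f2 *.
case: (decomp k.+1 x) => [xa | [p [c [z [-> kc za]]]]].
  have xa' : all (fun a => a <= k) x by rewrite -all_ltS.
  rewrite (altR_eq (fun s (sa : all (fun a => a <= k) s) => inL_F2 sa) xa').
  by have := IH x; lia.
have za' : all (fun a => a <= k) z by rewrite -all_ltS.
have Z := altR_eq (fun s (sa : all (fun a => a <= k) s) => inL_F2 sa) za'.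
move: kc; rewrite leq_eqVlt => /orP[/eqP ec | kc].
  subst c.
  case: (decomp k.+1 p) => [pa | [p' [c' [y [-> kc' ya]]]]].
    have := alt_P pa za; have := IH p; have := IH z; lia.
  rewrite -catA cat_cons altR_cat altC_zero; last first.
    move=> s; move: kc'; rewrite leq_eqVlt => /orP[/eqP <- | kc'].
      exact: inL_F4.
    exact: inL_F5.
  rewrite add0n altR_cons.
  have -> : inL k.+1 (c' :: y ++ k.+1 :: z) = false.
    move: kc'; rewrite leq_eqVlt => /orP[/eqP <- | kc'].
      exact: (inL_F4 k [::]).
    exact: (inL_F5 [::]).
  have := alt_P ya za; have := IH y; have := IH z.
  case: (false != _); lia.
rewrite altR_cat altC_zero; last by move=> s; exact: inL_F5.
rewrite add0n altR_cons (inL_F5 [::]) // Z.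
have := IH z; case: (false != _); lia.
Qed.

Lemma alt_bound k x : altR (inL k) x + 2 <= 2 ^ (k + 2).
Proof.
elim: k x => [|k IH] x; first exact: alt_base.
exact: alt_step.
Qed.

Lemma part1 k x : alt (inL k) x <= 2 ^ (k + 2) - 2.
Proof. rewrite alt_altR; have := alt_bound k x; lia. Qed.

Definition mx (w : seq nat) := foldl maxn 0 w.

Fixpoint fS k (w : seq nat) : seq (bool * nat) :=
  match w with
  | [::] => [::]
  | a :: x => (inL k (a :: x), mx (a :: x)) :: fS k x
  end.

Definition gS (a : nat) (p : bool * nat) : bool * nat :=
  (p.1 && ((a == 0) || (a != p.2)), maxn p.2 a).

Lemma mx_rcons w a : mx (rcons w a) = maxn (mx w) a.
Proof. by rewrite /mx -cats1 foldl_cat. Qed.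

Lemma inL_single k a : a <= k -> inL k [:: a] = (a == 0).
Proof. by move=> ak; rewrite inL_char /= ak; case: a ak. Qed.

Lemma inL_rcons k w a : w != [::] -> all (fun a => a <= k) w -> a <= k ->
  inL k (rcons w a) = inL k w && ((a == 0) || (a != mx w)).
Proof.
move=> wn wa ak; rewrite !inL_char -cats1 all_cat chk_cat /= ak wa /=.
case: w wn wa => [|b w] //= _ _.
by rewrite andbT !andbA.
Qed.

Lemma fS_rcons k s a : all (fun a => a <= k) s -> a <= k ->
  fS k (rcons s a) = map (gS a) (fS k s) ++ [:: (a == 0, a)].
Proof.
move=> sa ak; elim: s sa => [|x s IH] sa.
  by rewrite /= inL_single // /mx /= max0n.
have := sa => /= /andP[xk sa'].
rewrite /= IH //.
congr ((_, _) :: _).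
  by rewrite -rcons_cons inL_rcons.
by rewrite -rcons_cons mx_rcons.
Qed.


Definition stepF (k : nat) (t : seq (bool * nat)) (o : option 'I_k.+1) : seq (bool * nat) :=
  match o with
  | Some a => map (gS (nat_of_ord a)) t ++ [:: (nat_of_ord a == 0, nat_of_ord a)]
  | None => behead t
  end.

Definition accF (t : seq (bool * nat)) : bool :=
  match t with p :: _ => p.1 | [::] => false end.

Definition FF (k : nat) (w : seq 'I_k.+1) := fS k (map val w).

Lemma all_ord (k : nat) (w : seq 'I_k.+1) : all (fun a => a <= k) (map val w).
Proof. by apply/allP => x /mapP [y _ ->]; rewrite -ltnS; exact: ltn_ord. Qed.

Lemma run_FF (k : nat) (u : seq (option 'I_k.+1)) (acc : seq 'I_k.+1) : foldl (@stepF k) (FF acc) u = FF (wnd_rev acc u).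
Proof.
elim: u acc => [|[b|] u IH] acc //=.
  rewrite -IH; congr foldl.
  by rewrite /FF map_rcons fS_rcons ?all_ord // -ltnS ltn_ord.
rewrite -IH; congr foldl.
by case: acc.
Qed.

Lemma accF_FF (k : nat) (w : seq 'I_k.+1) : accF (FF w) = Lfin w.
Proof. by rewrite /FF /Lfin; case: (map val w) => [|a x] //=; rewrite inL_nil. Qed.


Fixpoint bits (W x : nat) : seq bool :=
  match W with 0 => [::] | W'.+1 => odd x :: bits W' x./2 end.

Lemma size_bits W x : size (bits W x) = W.
Proof. by elim: W x => [|W IH] x //=; rewrite IH. Qed.

Lemma bits_inj W x y : x < 2 ^ W -> y < 2 ^ W -> bits W x = bits W y -> x = y.
Proof.
elim: W x y => [|W IH] x y /=.
  by rewrite expn0 !ltnS !leqn0 => /eqP -> /eqP ->.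
rewrite expnS mul2n => hx hy [ho hb].
have := IH x./2 y./2; rewrite !ltn_half_double => /(_ hx hy hb) hh.
by rewrite -(odd_double_half x) -(odd_double_half y) ho hh.
Qed.

Definition chunk KW W (p : (bool * nat) * nat) : seq bool :=
  p.1.1 :: bits KW p.1.2 ++ bits W p.2.

Definition okp KW W (p : (bool * nat) * nat) : bool :=
  (p.1.2 < 2 ^ KW) && (p.2 < 2 ^ W).

Definition codeL KW W (s : seq ((bool * nat) * nat)) : seq bool :=
  flatten (map (chunk KW W) s).

Lemma size_chunk KW W p : size (chunk KW W p) = (1 + KW + W)%N.
Proof. by rewrite /chunk /= size_cat !size_bits. Qed.

Lemma size_codeL KW W s : size (codeL KW W s) = (size s * (1 + KW + W))%N.
Proof.
elim: s => [|p s IH] //=.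
change (size (chunk KW W p ++ codeL KW W s) = (size s).+1 * (1 + KW + W)).
by rewrite size_cat IH size_chunk mulSn.
Qed.

Lemma chunk_inj KW W p q : okp KW W p -> okp KW W q -> chunk KW W p = chunk KW W q -> p = q.
Proof.
case: p => [[b m] l]; case: q => [[b' m'] l'].
rewrite /okp /chunk /= => /andP[hm hl] /andP[hm' hl'] [eb].
move/eqP; rewrite eqseq_cat ?size_bits // => /andP[/eqP e1 /eqP e2].
by rewrite eb (bits_inj hm hm' e1) (bits_inj hl hl' e2).
Qed.

Lemma codeL_inj KW W s s' : all (okp KW W) s -> all (okp KW W) s' ->
  codeL KW W s = codeL KW W s' -> s = s'.
Proof.
elim: s s' => [|p s IH] [|q s'] //.
move=> /andP[op os] /andP[oq os'].
change (chunk KW W p ++ codeL KW W s = chunk KW W q ++ codeL KW W s' -> p :: s = q :: s').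
move=> /eqP.
rewrite eqseq_cat ?size_chunk // => /andP[/eqP e1 /eqP e2].
by rewrite (chunk_inj op oq e1) (IH s' os os' e2).
Qed.


Fixpoint rle {X : eqType} (s : seq X) : seq (X * nat) :=
  match s with
  | [::] => [::]
  | x :: s' =>
      match rle s' with
      | (y, l) :: r => if x == y then (y, l.+1) :: r else (x, 1) :: (y, l) :: r
      | [::] => [:: (x, 1)]
      end
  end.

Definition unrle {X : eqType} (r : seq (X * nat)) : seq X := flatten (map (fun p => nseq p.2 p.1) r).

Lemma rleK {X : eqType} (s : seq X) : unrle (rle s) = s.
Proof.
elim: s => [|x s IH] //=.
move: IH; case: (rle s) => [|[y l] r] /=.
  by rewrite /unrle /= => <-.
rewrite /unrle /= => IH.
case: eqP => [->|_] /=; by rewrite IH.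
Qed.

Lemma rle_inj {X : eqType} (s s' : seq X) : rle s = rle s' -> s = s'.
Proof. by move=> e; rewrite -(rleK s) e rleK. Qed.

Fixpoint chg {X : eqType} (s : seq X) : nat :=
  match s with
  | [::] => 0
  | x :: s' => (if s' is y :: _ then x != y else false) + chg s'
  end.

Lemma rle_head {X : eqType} (x : X) (s : seq X) : exists l r, rle (x :: s) = (x, l) :: r.
Proof.
rewrite /=; case: (rle s) => [|[y l] r]; first by exists 1, [::].
case: eqP => [e|_]; [subst; by eauto | by eauto].
Qed.

Lemma size_rle {X : eqType} (s : seq X) : size (rle s) <= chg s + 1.
Proof.
elim: s => [|x s IH] //=.
case: s IH => [|y s] IH; first by [].
have [l [r E]] := rle_head y s.
rewrite E in IH *; rewrite /=.
case: (x =P y) => [e | ne] /=.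
  by subst; move: IH => /=; rewrite add0n.
by move: IH => /=; rewrite add1n addSn ltnS.
Qed.

Lemma rle_len {X : eqType} (s : seq X) : all (fun p => p.2 <= size s) (rle s).
Proof.
elim: s => [|x s IH] //=.
move: IH; case: (rle s) => [|[y l] r] /=; first by [].
move=> /andP[ls rs].
have rs' : all (fun p : X * nat => p.2 <= (size s).+1) r.
  by apply: sub_all rs => p /leqW.
case: eqP => _ /=; rewrite rs' ?andbT ?ltnS //.
by rewrite (leqW ls).
Qed.

Lemma rle_fst {X : eqType} (P : pred X) (s : seq X) : all P s -> all (fun p => P p.1) (rle s).
Proof.
elim: s => [|x s IH] //= /andP[px ps].
move: (IH ps); case: (rle s) => [|[y l] r] /=; first by rewrite px.
move=> /andP[py pr].
by case: eqP => _ /=; rewrite ?px py pr.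
Qed.


Lemma chg_pair (A B : eqType) (t : seq (A * B)) : chg t <= chg (map fst t) + chg (map snd t).
Proof.
elim: t => [|[a b] t IH] //=.
case: t IH => [|[a' b'] t] IH; first by [].
rewrite /= in IH *.
rewrite addnACA leq_add // xpair_eqE negb_and.
by case: (a != a'); case: (b != b').
Qed.

Lemma foldl_maxnE m x : foldl maxn m x = maxn m (foldl maxn 0 x).
Proof.
elim: x m => [|b x IH] m /=; first by rewrite maxn0.
by rewrite IH (IH (maxn 0 b)) max0n maxnA.
Qed.

Lemma chg_snd k w : chg (map snd (fS k w)) <= mx w.
Proof.
elim: w => [|a x IH] //=.
case: x IH => [|b x] IH; first by [].
rewrite /= in IH *.
have E : mx [:: a, b & x] = maxn a (mx (b :: x)).
  by rewrite /mx /= [LHS]foldl_maxnE [in RHS]foldl_maxnE !max0n maxnA.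
rewrite E; move: IH; set M := mx (b :: x); set R := (X in X <= M -> _).
case: (maxn a M =P M) => [-> | ne] /=; first by rewrite add0n.
move=> h; rewrite add1n; apply: leq_ltn_trans h _.
by rewrite ltn_neqAle leq_maxr andbT eq_sym; apply/eqP.
Qed.

Lemma chg_fst k w : chg (map fst (fS k w)) <= altR (inL k) w.
Proof.
elim: w => [|a x IH] //=.
case: x IH => [|b x] IH; first by [].
rewrite /= in IH *.
by rewrite leq_add2l.
Qed.

Lemma fS_le k w : all (fun a => a <= k) w -> all (fun p => p.2 <= k) (fS k w).
Proof.
elim: w => [|a x IH] //= /andP[ak xa].
rewrite IH // andbT /mx /=; apply: foldl_maxn_le => //.
by rewrite max0n.
Qed.

Lemma size_fS k w : size (fS k w) = size w.
Proof. by elim: w => [|a x IH] //=; rewrite IH. Qed.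

Definition encF KW W (t : seq (bool * nat)) : seq bool :=
  if all (okp KW W) (rle t) then true :: codeL KW W (rle t)
  else false :: nseq (pickle t) true.

Lemma encF_inj KW W : injective (encF KW W).
Proof.
move=> t t'; rewrite /encF; case: ifP => h; case: ifP => h' //.
  by case=> /(codeL_inj h h') /rle_inj.
case=> /(congr1 size); rewrite !size_nseq.
move=> e; have := congr1 (@unpickle (seq (bool * nat))) e; rewrite !pickleK; by case.
Qed.

Definition Alg k n : stream_alg 'I_k.+1 :=
  @StreamAlg _ (seq (bool * nat)) [::] (@stepF k) accF _ (@encF_inj k.+1 (log2 n).+1).

Lemma Alg_run k n u : run (Alg k n) u = FF (wnd u).
Proof. by rewrite /run /= -run_FF. Qed.

Lemma Alg_correct k n : sw_alg_for (@Lfin k) (Alg k n).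
Proof. by move=> w; rewrite Alg_run /= accF_FF. Qed.

Lemma enc_size k n (w : seq 'I_k.+1) : size w <= n ->
  size (encF k.+1 (log2 n).+1 (FF w)) <= 1 + (2 ^ (k + 2) + k) * (k + 3 + log2 n).
Proof.
move=> wn.
set v := map val w.
have va : all (fun a => a <= k) v := all_ord w.
set t := FF w.
have tE : t = fS k v by [].
have st : size t = size w by rewrite tE size_fS size_map.
have ok : all (okp k.+1 (log2 n).+1) (rle t).
  apply/allP => p pr.
  have h1 := allP (rle_len t) p pr.
  have h2 := allP (rle_fst (fS_le va)) p pr.
  rewrite /= in h1 h2.
  rewrite /okp; apply/andP; split.
    apply: leq_ltn_trans (ltn_expl _ (isT : 1 < 2)); exact: (leqW h2).
  apply: leq_ltn_trans (trunc_log_ltn n (isT : 1 < 2)).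
  by apply: leq_trans h1 _; rewrite st.
rewrite /encF ok /= size_codeL.
have r1 := size_rle t.
have r2 := chg_pair t.
have r3 := chg_fst k v.
have r4 := chg_snd k v.
have r5 : mx v <= k by apply: foldl_maxn_le.
have r6 := alt_bound k v.
rewrite -tE in r3 r4.
set A := 2 ^ (k + 2) in r6 *.
have hr : size (rle t) <= A + k.
  apply: leq_trans r1 _; apply: leq_trans (leq_add r2 (leqnn 1)) _.
  have := leq_add r3 r4; move: r5 r6.
  move: (chg _) (chg _) (altR _ _) (mx v) => a b c d.
  lia.
rewrite add1n ltnS.
apply: leq_trans (leq_mul hr (leqnn _)) _.
rewrite (_ : (1 + k.+1 + (log2 n).+1) = k + 3 + log2 n) //; lia.
Qed.

Theorem lemma5p13 :
  forall k : nat,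
    (forall x : seq nat, alt (inL k) x <= 2 ^ (k + 2) - 2) /\
    (exists c N : nat, forall n : nat, N <= n ->
       V_le (@Lfin k) n ((2 ^ (k + 3) * (k + 3) + 1) * log2 n + c)).
Proof.
move=> k; split; first exact: part1.
exists (1 + (2 ^ (k + 2) + k) * (k + 3)), 0 => n _.
exists (Alg k n); split; first exact: Alg_correct.
move=> u hu i.
rewrite Alg_run.
apply: leq_trans (enc_size (hu i)) _.
have E : 2 ^ (k + 3) = 2 * 2 ^ (k + 2) by rewrite (addnS k 2) expnS.
rewrite E.
set A := 2 ^ (k + 2).
have A1 : 1 <= A by rewrite expn_gt0.
set L := log2 n.
rewrite mulnDr.
have h : A + k <= 2 * A * (k + 3) + 1 by nia.
have := leq_mul h (leqnn L).
lia.
Qed.
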